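(* Let $K\ge 2$, let $\bm{\ell}\in\mathbb{R}^K$ be a logit vector, and let $\hat{\bm{\sigma}}=\mathrm{softmax}(\bm{\ell})\in(0,1)^K$, i.e. $\hat{\bm{\sigma}}_i=\exp(\bm{\ell}_i)/\sum_{k=1}^K\exp(\bm{\ell}_k)$. Define the logit distance vector $\bm{d}\in\mathbb{R}^K$ by $\bm{d}_k=\max_{1\le i\le K}\bm{\ell}_i-\bm{\ell}_k$, and let ${\bm{u}}=(1/K,\dots,1/K)$ be the uniform distribution on $K$ classes. Then $$\mathrm{KL}[{\bm{u}}\,\|\,\hat{\bm{\sigma}}]\;\le\;\frac{1}{K}\sum_{i=1}^K\bm{d}_i\;\le\;\mathrm{KL}[{\bm{u}}\,\|\,\hat{\bm{\sigma}}]+\log K,$$ equivalently, writing $\mathcal{C}=-\frac{1}{K}\sum_{k=1}^K\log\hat{\bm{\sigma}}_k=\mathrm{KL}[{\bm{u}}\|\hat{\bm{\sigma}}]+\log K$, one has $\mathcal{C}-\log K\le \frac1K\sum_i\bm{d}_i\le \mathcal{C}$.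
   Context: $\mathrm{KL}[{\bm{u}}\|\hat{\bm{\sigma}}]=\sum_{k=1}^K u_k\log(u_k/\hat{\bm{\sigma}}_k)$ with natural logarithm. The logit-distance vector corresponds to a hard constraint $\bm{d}=\bm{0}$ (all logits equal), and $\frac1K\sum_i \bm{d}_i$ is the associated linear penalty. *)

(* Defs.v *)
From HB Require Import structures.
From mathcomp Require Import all_boot all_order all_algebra.
From mathcomp Require Import all_classical all_reals all_analysis.
Set Implicit Arguments. Unset Strict Implicit. Unset Printing Implicit Defensive.
Import Order.TTheory GRing.Theory Num.Theory.
Local Open Scope ring_scope.

Definition softmax (R : realType) (K : nat) (l : 'I_K -> R) (i : 'I_K) : R :=
  expR (l i) / \sum_(k < K) expR (l k).

(* logit distance vector: d_k = max_{i} l_i - l_k.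
   The iterated max starts from l k itself, which is harmless since
   l k is one of the l_i; hence this is exactly max_i l_i - l_k. *)
Definition logit_dist (R : realType) (K : nat) (l : 'I_K -> R) (k : 'I_K) : R :=
  \big[Num.max/l k]_(i < K) l i - l k.

Definition KL (R : realType) (K : nat) (u s : 'I_K -> R) : R :=
  \sum_(k < K) u k * ln (u k / s k).

Definition uniform (R : realType) (K : nat) (k : 'I_K) : R := K%:R^-1.

(* Main.v *)
Require Import Defs.
From HB Require Import structures.
From mathcomp Require Import all_boot all_order all_algebra.
From mathcomp Require Import all_classical all_reals all_analysis.
From mathcomp Require Import lra.
Import Order.TTheory GRing.Theory Num.Theory.
Local Open Scope ring_scope.

Theorem proposition3p3 (R : realType) (K : nat) (hK : (2 <= K)%N)
    (l : 'I_K -> R) :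
  KL (@uniform R K) (softmax l)
    <= K%:R^-1 * \sum_(i < K) logit_dist l i
  /\ K%:R^-1 * \sum_(i < K) logit_dist l i
    <= KL (@uniform R K) (softmax l) + ln (K%:R : R).
Proof.
case: K hK l => [//|n] _ l.
set K := n.+1.
have Kpos : 0 < (K%:R : R) by rewrite ltr0n.
have KV1 : forall x : R, K%:R^-1 * x *+ K = x.
  by move=> x; rewrite -mulr_natr mulrAC mulVf ?mul1r // gt_eqF.
have KV2 : forall x : R, K%:R^-1 * (x *+ K) = x.
  by move=> x; rewrite mulrnAr KV1.
set M := \big[Num.max/l ord0]_(i < K) l i.
have hub : forall i, l i <= M by move=> i; exact: le_bigmax.
have Mk : forall k, \big[Num.max/l k]_(i < K) l i = M.
  move=> k; apply/le_anti/andP; split.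
    by apply: bigmax_le => // i _; exact: hub.
  by apply: bigmax_le => [|i _]; exact: le_bigmax.
have [j hj] : exists j, M = l j.
  rewrite /M; apply: (big_ind (fun y => exists j, y = l j)).
  - by exists ord0.
  - move=> x y [a ->] [b ->]; rewrite /Order.max; case: ifP => _.
      by exists b. by exists a.
  - by move=> i _; exists i.
set S := \sum_(k < K) expR (l k).
have Spos : 0 < S.
  by rewrite /S (bigD1 ord0) //= ltr_pwDl ?expR_gt0 ?sumr_ge0 // => i _; rewrite expR_ge0.
have posS : S \in Num.pos by rewrite posrE.
have hd : \sum_(i < K) logit_dist l i = M *+ K - \sum_(i < K) l i.
  rewrite /logit_dist sumrB; congr (_ - _).
  by rewrite (eq_bigr (fun _ => M)) ?sumr_const ?card_ord // => i _; rewrite Mk.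
have hKL : KL (@uniform R K) (softmax l)
    = K%:R^-1 * (ln S - ln K%:R) *+ K - K%:R^-1 * \sum_(i < K) l i.
  rewrite /KL mulr_sumr.
  have -> : K%:R^-1 * (ln S - ln K%:R) *+ K = \sum_(i < K) K%:R^-1 * (ln S - ln K%:R)
    by rewrite sumr_const card_ord.
  rewrite -sumrB.
  apply: eq_bigr => i _; rewrite /uniform /softmax.
  have e1 : expR (l i) / S \in Num.pos by rewrite posrE divr_gt0 ?expR_gt0.
  have e2 : (K%:R^-1 : R) \in Num.pos by rewrite posrE invr_gt0.
  rewrite ln_div //.
  have e3 : expR (l i) \in Num.pos by rewrite posrE expR_gt0.
  rewrite ln_div // expRK lnV //.
  rewrite -mulrBr -/S; congr (_ * _).
  by rewrite opprB addrCA addrA.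
rewrite hKL hd KV1 mulrBr KV2.
have h1 : ln S <= M + ln K%:R.
  rewrite -[M]expRK -lnM ?posrE ?expR_gt0 //.
  rewrite ler_ln ?posrE ?mulr_gt0 ?expR_gt0 //.
  rewrite mulr_natr -[K in _ *+ K]card_ord -sumr_const /S.
  by apply: ler_sum => i _; rewrite ler_expR.
have h2 : M <= ln S.
  rewrite hj -[l j]expRK ler_ln ?posrE ?expR_gt0 //.
  by rewrite /S (bigD1 j) //= lerDl sumr_ge0 // => i _; rewrite expR_ge0.
split; lra.
Qed.
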